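(* Let $n,m\ge 2$, let $2\le r\le n$ and $2\le s\le m$, let $A\subseteq V(K_n)$ with $|A|=r$ and $B\subseteq V(K_m)$ with $|B|=s$. If $S$ is a total $2$-dominating set of $K_n\Box K_m$, then \[ \bigl|S\cap\bigl[(A\times V(K_m))\cup(V(K_n)\times B)\bigr]\bigr|\ge\gamma_{2t}(K_r\Box K_s). \]
   Context: For a graph $G=(V,E)$, a set $S\subseteq V$ is a total $2$-dominating set if every vertex of $V$ (including those in $S$) is adjacent to at least $2$ vertices of $S$; $\gamma_{2t}(G)$ is the minimum cardinality of such a set. $G\Box H$ denotes the Cartesian product: vertex set $V(G)\times V(H)$, with $(u_1,v_1)\sim(u_2,v_2)$ iff either $u_1=u_2$ and $v_1\sim v_2$, or $v_1=v_2$ and $u_1\sim u_2$. $K_n$ is the complete graph on $n$ vertices. *)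

(* Defs.v *)
From mathcomp Require Import all_boot all_order.
Set Implicit Arguments. Unset Strict Implicit. Unset Printing Implicit Defensive.

Definition Kadj (n : nat) : rel 'I_n := fun u v => u != v.

Definition cartadj (T U : finType) (g : rel T) (h : rel U) : rel (T * U) :=
  fun x y => ((x.1 == y.1) && h x.2 y.2) || ((x.2 == y.2) && g x.1 y.1).

Definition KK (n m : nat) : rel ('I_n * 'I_m) := cartadj (@Kadj n) (@Kadj m).

Definition total2dom (T : finType) (g : rel T) (S : {set T}) : bool :=
  [forall v, 2 <= #|[set u in S | g v u]|].

(* gamma_{2t}(G): minimum cardinality of a total 2-dominating set
   (default #|T| if none exists, never used for graphs that have one). *)
Definition gamma2t (T : finType) (g : rel T) : nat :=
  \big[minn/#|T|]_(S : {set T} | total2dom g S) #|S|.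

(* Main.v *)
Require Import Defs.
From mathcomp Require Import all_boot all_order.
From mathcomp Require Import zify.
Set Implicit Arguments. Unset Strict Implicit. Unset Printing Implicit Defensive.

Lemma ar_grow n p q t x : n <= p + (q + t) -> n <= p + (q + x + t).
Proof. lia. Qed.
Lemma ar_grow2 n p q t x : n <= p + (q + t) -> n <= p + (q + x + x + t).
Proof. lia. Qed.
Lemma ar_new u p w t : 0 < p -> 0 < w + t -> 2 + 2 * 1 <= u + p + (w + 1 + 1 + t).
Proof. lia. Qed.

Section Gen.
Variables (R C : finType).

Lemma nb_count (X : {set R * C}) (a : R) (b : C) :
  #|[set u in X | cartadj (fun x y : R => x != y) (fun x y : C => x != y) (a, b) u]|
    + 2 * ((a, b) \in X)
  = #|[set y | (a, y) \in X]| + #|[set x | (x, b) \in X]|.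
Proof.
set Rw := [set u in X | u.1 == a].
set Cl := [set u in X | u.2 == b].
have eR : #|[set y | (a, y) \in X]| = #|Rw|.
  rewrite -(card_imset _ (fun y1 y2 (h : (a, y1) = (a, y2)) => f_equal snd h)).
  apply: eq_card => -[x y]; rewrite [in RHS]inE /=; apply/imsetP/andP.
    by case=> y' hy [-> ->]; rewrite inE in hy; split.
  by case=> hx /eqP ex; subst x; exists y => //; rewrite inE.
have eC : #|[set x | (x, b) \in X]| = #|Cl|.
  rewrite -(card_imset _ (fun y1 y2 (h : (y1, b) = (y2, b)) => f_equal fst h)).
  apply: eq_card => -[x y]; rewrite [in RHS]inE /=; apply/imsetP/andP.
    by case=> y' hy [-> ->]; rewrite inE in hy; split.
  by case=> hx /eqP ey; subst y; exists x => //; rewrite inE.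
have eN : [set u in X | cartadj (fun x y : R => x != y) (fun x y : C => x != y) (a, b) u]
          = (Rw :\ (a, b)) :|: (Cl :\ (a, b)).
  apply/setP => -[x y]; rewrite !inE /cartadj /= xpair_eqE.
  case: ((x, y) \in X); rewrite ?andbF ?andbT //=;
  rewrite [a == x]eq_sym [b == y]eq_sym;
  by case: (x == a); case: (y == b).
have dj : (Rw :\ (a, b)) :&: (Cl :\ (a, b)) = set0.
  apply/setP => -[x y]; rewrite !inE xpair_eqE.
  by case: (x == a); case: (y == b); rewrite ?andbF ?andbT.
rewrite eN; have := cardsUI (Rw :\ (a, b)) (Cl :\ (a, b)); rewrite dj cards0 addn0 => ->.
rewrite eR eC (cardsD1 (a, b) Rw) (cardsD1 (a, b) Cl) !inE !eqxx !andbT.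
case: ((a, b) \in X); rewrite /=; set p := #|Rw :\ (a, b)|; set q := #|Cl :\ (a, b)|; lia.
Qed.

Definition rdeg (B : {set C}) (Z : {set R * C}) a := #|[set b in B | (a, b) \in Z]|.
Definition cdeg (A : {set R}) (Z : {set R * C}) b := #|[set a in A | (a, b) \in Z]|.
Definition cvalid (A : {set R}) (B : {set C}) (Z : {set R * C}) (tr : R -> nat) (tc : C -> nat) :=
  forall a b, a \in A -> b \in B ->
    2 + 2 * ((a, b) \in Z) <= (rdeg B Z a + tr a) + (cdeg A Z b + tc b).
Definition nout (A : {set R}) (B : {set C}) (tr : R -> nat) (tc : C -> nat) :=
  \sum_(a in A) tr a + \sum_(b in B) tc b.
Definition cost (A : {set R}) (B : {set C}) (Z : {set R * C}) tr tc := #|Z| + nout A B tr tc.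
Definition step (A : {set R}) (B : {set C}) (Z : {set R * C}) (tr : R -> nat) (tc : C -> nat) := exists (Z' : {set R * C}) (tr' : R -> nat) (tc' : C -> nat),
  [/\ Z' \subset setX A B, cvalid A B Z' tr' tc',
      cost A B Z' tr' tc' <= cost A B Z tr tc & nout A B tr' tc' < nout A B tr tc].

Lemma card_rows (X : {set R * C}) : #|X| = \sum_a #|[set y | (a, y) \in X]|.
Proof.
rewrite -sum1_card big_mkcond /=.
rewrite (eq_bigr (fun p : R * C => if (p.1, p.2) \in X then 1 else 0)); last by case.
rewrite -(pair_big xpredT xpredT (fun x y => if (x, y) \in X then 1 else 0)) /=.
apply: eq_bigr => x _; rewrite -sum1_card [RHS]big_mkcond /=.
by apply: eq_bigr => y _; rewrite inE.
Qed.
End Gen.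

Definition trZ (R C : finType) (Z : {set R * C}) : {set C * R} := [set u | (u.2, u.1) \in Z].

Section Tr.
Variables (R C : finType).
Implicit Types (A : {set R}) (B : {set C}) (Z : {set R * C}) (tr : R -> nat) (tc : C -> nat).

Lemma mem_trZ Z a b : ((b, a) \in trZ Z) = ((a, b) \in Z).
Proof. by rewrite inE. Qed.

Lemma trZK Z : trZ (trZ Z) = Z.
Proof. by apply/setP => -[x y]; rewrite !inE. Qed.

Lemma card_trZ Z : #|trZ Z| = #|Z|.
Proof.
have -> : trZ Z = [set (u.2, u.1) | u in Z].
  apply/setP => -[x y]; rewrite inE /=; apply/idP/imsetP.
    by move=> h; exists (y, x).
  by case=> -[u v] h [-> ->].
by apply: card_imset => -[x y] [u v] /= [-> ->].
Qed.

Lemma rdeg_tr A Z b : rdeg A (trZ Z) b = cdeg A Z b.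
Proof. by apply: eq_card => x; rewrite !inE. Qed.

Lemma cdeg_tr B Z a : cdeg B (trZ Z) a = rdeg B Z a.
Proof. by apply: eq_card => x; rewrite !inE. Qed.

Lemma sub_tr A B Z : (trZ Z \subset setX B A) = (Z \subset setX A B).
Proof.
apply/subsetP/subsetP => h [x y] hz.
  by move: (h (y, x)); rewrite mem_trZ hz !inE andbC => /(_ isT).
by move: (h (y, x)); rewrite -mem_trZ hz !inE andbC => /(_ isT).
Qed.

Lemma cvalid_tr A B Z tr tc : cvalid B A (trZ Z) tc tr -> cvalid A B Z tr tc.
Proof.
move=> h a b ha hb; have := h b a hb ha.
by rewrite mem_trZ rdeg_tr cdeg_tr [X in _ <= X]addnC.
Qed.

Lemma cvalid_trI A B Z tr tc : cvalid A B Z tr tc -> cvalid B A (trZ Z) tc tr.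
Proof.
move=> h b a hb ha; have := h a b ha hb.
by rewrite mem_trZ rdeg_tr cdeg_tr [X in _ <= X]addnC.
Qed.

Lemma nout_tr A B tr tc : nout B A tc tr = nout A B tr tc.
Proof. by rewrite /nout addnC. Qed.

Lemma cost_tr A B Z tr tc : cost B A (trZ Z) tc tr = cost A B Z tr tc.
Proof. by rewrite /cost card_trZ nout_tr. Qed.

End Tr.

Lemma step_tr (R C : finType) (A : {set R}) (B : {set C}) (Z : {set R * C}) (tr : R -> nat) (tc : C -> nat) : step B A (trZ Z) tc tr -> step A B Z tr tc.
Proof.
case=> Z' [tr' [tc' [h1 h2 h3 h4]]].
exists (trZ Z'), tc', tr'; split.
- by rewrite sub_tr.
- by apply: cvalid_tr; rewrite trZK.
- by rewrite cost_tr -(cost_tr A B Z).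
- by rewrite nout_tr -(nout_tr A B).
Qed.

Lemma card_cols (R C : finType) (X : {set R * C}) : #|X| = \sum_b #|[set x | (x, b) \in X]|.
Proof.
rewrite -card_trZ card_rows; apply: eq_bigr => b _.
by apply: eq_card => x; rewrite !inE.
Qed.

Definition dec (R : finType) (tr : R -> nat) (a : R) := fun x => if x == a then (tr x).-1 else tr x.

Section Moves.
Variables (R C : finType) (A : {set R}) (B : {set C}).
Implicit Types (Z : {set R * C}) (tr : R -> nat) (tc : C -> nat).

Lemma sum_eq1 (a0 : R) : a0 \in A -> \sum_(a in A) (a == a0) = 1.
Proof.
move=> h; rewrite (bigD1 a0) //= eqxx big1 // => a /andP[_ /negbTE ->] //.
Qed.

Lemma sum_dec tr a : a \in A -> 0 < tr a ->
  \sum_(x in A) dec tr a x + 1 = \sum_(x in A) tr x.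
Proof.
move=> ha hp; rewrite (bigD1 a) //= [RHS](bigD1 a) //= /dec eqxx.
rewrite (eq_bigr tr); last by move=> x /andP[_ /negbTE ->].
by rewrite addnAC addn1 prednK.
Qed.

Lemma nout_dec tr tc a : a \in A -> 0 < tr a ->
  nout A B (dec tr a) tc + 1 = nout A B tr tc.
Proof. by move=> ha hp; rewrite /nout -(sum_dec ha hp) addnAC. Qed.

Lemma rdeg_add Z a b a' : b \in B -> (a, b) \notin Z ->
  rdeg B ((a, b) |: Z) a' = rdeg B Z a' + (a' == a).
Proof.
move=> hb hn; rewrite /rdeg; case: eqP => [->|ne].
  have -> : [set y in B | (a, y) \in (a, b) |: Z] = b |: [set y in B | (a, y) \in Z].
    apply/setP => y; rewrite !inE xpair_eqE eqxx /=.
    by case: eqP => [->|]; rewrite ?hb ?orbF.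
  by rewrite cardsU1 inE (negbTE hn) andbF addnC.
rewrite addn0; apply: eq_card => y; rewrite !inE xpair_eqE.
by case: eqP.
Qed.

Lemma cdeg_add Z a b b' : a \in A -> (a, b) \notin Z ->
  cdeg A ((a, b) |: Z) b' = cdeg A Z b' + (b' == b).
Proof.
move=> ha hn; rewrite /cdeg; case: eqP => [->|ne].
  have -> : [set x in A | (x, b) \in (a, b) |: Z] = a |: [set x in A | (x, b) \in Z].
    apply/setP => x; rewrite !inE xpair_eqE eqxx /= andbT.
    by case: eqP => [->|]; rewrite ?ha ?orbF.
  by rewrite cardsU1 inE (negbTE hn) andbF addnC.
rewrite addn0; apply: eq_card => x; rewrite !inE xpair_eqE.
by case: (x == a); case: eqP.
Qed.

Lemma rdeg_op Z tr a b a' : b \in B -> (a, b) \notin Z -> 0 < tr a ->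
  rdeg B ((a, b) |: Z) a' + dec tr a a' = rdeg B Z a' + tr a'.
Proof.
move=> hb hn hp; rewrite rdeg_add // /dec; case: eqP => [->|]; last by rewrite addn0.
by rewrite addn1 addSnnS prednK.
Qed.

Lemma card_add Z a b : (a, b) \notin Z -> #|(a, b) |: Z| = #|Z| + 1.
Proof. by move=> hn; rewrite cardsU1 hn addnC. Qed.

Lemma sum_rdeg Z : Z \subset setX A B -> \sum_(a in A) rdeg B Z a = #|Z|.
Proof.
move=> hs; rewrite card_rows [RHS](bigID (fun a => a \in A)) /=.
rewrite [X in _ = _ + X]big1 ?addn0; last first.
  move=> a ha; apply/eqP; rewrite cards_eq0; apply/eqP/setP => y; rewrite !inE.
  by apply/negbTE; apply/negP => /(subsetP hs); rewrite inE /= (negbTE ha).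
apply: eq_bigr => a ha; apply: eq_card => y; rewrite !inE.
by case h : ((a, y) \in Z); rewrite ?andbF // andbT; move/(subsetP hs): h; rewrite inE => /andP[].
Qed.

Lemma sum_cdeg Z : Z \subset setX A B -> \sum_(b in B) cdeg A Z b = #|Z|.
Proof.
move=> hs; rewrite card_cols [RHS](bigID (fun b => b \in B)) /=.
rewrite [X in _ = _ + X]big1 ?addn0; last first.
  move=> b hb; apply/eqP; rewrite cards_eq0; apply/eqP/setP => y; rewrite !inE.
  by apply/negbTE; apply/negP => /(subsetP hs); rewrite inE /= (negbTE hb) andbF.
apply: eq_bigr => b hb; apply: eq_card => y; rewrite !inE.
by case h : ((y, b) \in Z); rewrite ?andbF // andbT; move/(subsetP hs): h; rewrite inE => /andP[].
Qed.

Lemma cost_split Z tr tc : Z \subset setX A B ->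
  cost A B Z tr tc + #|Z| =
  \sum_(a in A) (rdeg B Z a + tr a) + \sum_(b in B) (cdeg A Z b + tc b).
Proof.
move=> hs; rewrite !big_split /= sum_rdeg // sum_cdeg // /cost /nout.
set p := #|Z|; set q := \sum_(a in A) tr a; set r := \sum_(b in B) tc b; lia.
Qed.

End Moves.

Section Moves2.
Variables (R C : finType) (A : {set R}) (B : {set C}) (Z : {set R * C})
  (tr : R -> nat) (tc : C -> nat).
Hypothesis hs : Z \subset setX A B.
Hypothesis hv : cvalid A B Z tr tc.

Lemma mv_rw1 a b : a \in A -> b \in B -> 0 < tr a -> (a, b) \notin Z ->
  3 <= (rdeg B Z a + tr a) + (cdeg A Z b + tc b) -> step A B Z tr tc.
Proof.
move=> ha hb hp hn h3.
exists ((a, b) |: Z), (dec tr a), tc; split.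
- by apply/subsetP => u; rewrite !inE => /orP[/eqP ->|/(subsetP hs)]; rewrite ?inE ?ha ?hb.
- move=> a' b' ha' hb'; rewrite rdeg_op // cdeg_add // !inE.
  case e : ((a', b') == (a, b)).
    by move/eqP: e => [-> ->]; rewrite eqxx /=; move: h3; move: (rdeg B Z a + tr a) (cdeg A Z b) (tc b) => p q t; lia.
  move: (hv ha' hb'); rewrite /=; move: (rdeg B Z a' + tr a') (cdeg A Z b') (tc b') ((a', b') \in Z) (b' == b) => p q t z x; exact: ar_grow.
- rewrite /cost card_add // -(nout_dec B tc ha hp); move: (nout A B (dec tr a) tc) (#|Z|) => x y; lia.
- rewrite -(nout_dec B tc ha hp); move: (nout A B (dec tr a) tc) => x; lia.
Qed.

Lemma mv_del a : a \in A -> 0 < tr a ->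
  (forall b, b \in B -> 2 + 2 * ((a, b) \in Z) <= (rdeg B Z a + (tr a).-1) + (cdeg A Z b + tc b)) ->
  step A B Z tr tc.
Proof.
move=> ha hp hd.
exists Z, (dec tr a), tc; split => //.
- move=> a' b' ha' hb'; rewrite /dec; case: eqP => [->|_]; first exact: hd.
  exact: hv.
- rewrite /cost -(nout_dec B tc ha hp); move: (nout A B (dec tr a) tc) (#|Z|) => x y; lia.
- rewrite -(nout_dec B tc ha hp); move: (nout A B (dec tr a) tc) => x; lia.
Qed.

Lemma mv_rw2 a1 a2 b : a1 \in A -> a2 \in A -> a1 != a2 -> b \in B ->
  0 < tr a1 -> 0 < tr a2 -> (a1, b) \notin Z -> (a2, b) \notin Z ->
  1 <= cdeg A Z b + tc b -> step A B Z tr tc.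
Proof.
move=> h1 h2 ne hb p1 p2 n1 n2 hc.
have n1' : (a1, b) \notin (a2, b) |: Z.
  by rewrite !inE negb_or n1 andbT; apply: contra ne => /eqP [->].
have p1' : 0 < dec tr a2 a1 by rewrite /dec (negbTE ne).
exists ((a1, b) |: ((a2, b) |: Z)), (dec (dec tr a2) a1), tc; split.
- by apply/subsetP => u; rewrite !inE => /orP[/eqP ->|/orP[/eqP ->|/(subsetP hs)]];
    rewrite ?inE ?h1 ?h2 ?hb.
- move=> a' b' ha' hb'.
  rewrite rdeg_op // rdeg_op // cdeg_add // cdeg_add // !inE.
  case e1 : ((a', b') == (a1, b)).
    move/eqP: e1 => [-> ->]; rewrite eqxx /=; move: p1 hc; move: (rdeg B Z a1) (tr a1) (cdeg A Z b) (tc b) => u p w t; exact: ar_new.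
  case e2 : ((a', b') == (a2, b)).
    move/eqP: e2 => [-> ->]; rewrite eqxx /=; move: p2 hc; move: (rdeg B Z a2) (tr a2) (cdeg A Z b) (tc b) => u p w t; exact: ar_new.
  move: (hv ha' hb'); rewrite /=; move: (rdeg B Z a' + tr a') (cdeg A Z b') (tc b') ((a', b') \in Z) (b' == b) => p q t z x.
  exact: ar_grow2.
- rewrite /cost card_add // card_add // -(nout_dec B tc h2 p2) -(nout_dec B tc h1 p1').
  move: (nout A B (dec (dec tr a2) a1) tc) (#|Z|) => x y; lia.
- rewrite -(nout_dec B tc h2 p2) -(nout_dec B tc h1 p1'); move: (nout A B (dec (dec tr a2) a1) tc) => x; lia.
Qed.
End Moves2.

Section Helpers.
Variables (R C : finType) (A : {set R}) (B : {set C}).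
Implicit Types (Z : {set R * C}) (tr : R -> nat) (tc : C -> nat).

Lemma rdeg0 Z a b : b \in B -> rdeg B Z a = 0 -> (a, b) \notin Z.
Proof.
move=> hb /eqP; rewrite cards_eq0 => /eqP h; apply/negP => hz.
have : b \in [set y in B | (a, y) \in Z] by rewrite inE hb hz.
by rewrite h inE.
Qed.

Lemma cdeg0 Z a b : a \in A -> cdeg A Z b = 0 -> (a, b) \notin Z.
Proof.
move=> ha /eqP; rewrite cards_eq0 => /eqP h; apply/negP => hz.
have : a \in [set x in A | (x, b) \in Z] by rewrite inE ha hz.
by rewrite h inE.
Qed.

Lemma rdeg_ex Z a : 0 < rdeg B Z a -> exists2 b, b \in B & (a, b) \in Z.
Proof. by case/card_gt0P => b; rewrite inE => /andP[hb hz]; exists b. Qed.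

Lemma rdeg_full Z a : (forall b, b \in B -> (a, b) \in Z) -> rdeg B Z a = #|B|.
Proof. by move=> h; apply: eq_card => b; rewrite inE; case hb : (b \in B) => //=; rewrite h. Qed.

Lemma sum2 (F : R -> nat) a a' : a \in A -> a' \in A -> a != a' ->
  F a + F a' <= \sum_(x in A) F x.
Proof.
move=> ha ha' ne; rewrite (bigD1 a) //= (bigD1 a') /=; last by rewrite ha' eq_sym ne.
by rewrite addnA leq_addr.
Qed.

Lemma two_rows : 2 <= #|A| -> 2 <= #|B| -> exists G : {set R * C},
  [/\ G \subset setX A B, cvalid A B G (fun _ => 0) (fun _ => 0) & #|G| = 2 * #|B|].
Proof.
move=> hA hB; case/card_gt1P: hA => a1 [a2 [h1 h2 ne]].
exists (setX [set a1; a2] B); split.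
- apply/subsetP => -[x y]; rewrite !inE => /andP[/orP[/eqP ->|/eqP ->] ->];
  by rewrite ?h1 ?h2.
- move=> a b ha hb.
  have -> : cdeg A (setX [set a1; a2] B) b = #|[set a1; a2]|.
    apply: eq_card => x; rewrite !inE hb andbT.
    rewrite /=; case: eqP => [->|_]; rewrite ?h1 //=; case: eqP => [->|_]; rewrite ?h2 ?andbF //.
  rewrite cards2 ne !addn0 /rdeg; case h : (a \in [set a1; a2]).
    rewrite (eq_card (B := B)); last by move=> y; rewrite !inE; move: h; rewrite !inE => ->; case: (y \in B).
    rewrite !inE; move: h; rewrite !inE => ->; rewrite hb /=.
    by move: hB; set k := #|B|; lia.
  rewrite !inE; move: h; rewrite !inE => ->; rewrite /=.
  by rewrite muln0 addn0 leq_addl.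
- by rewrite cardsX cards2 ne.
Qed.
End Helpers.

Lemma ar_B2 x y k c : 3 <= k -> k <= x -> 1 <= y -> x + y <= c -> c < 2 * 2 -> False.
Proof. lia. Qed.

Section Key.
Variables (R C : finType) (A : {set R}) (B : {set C}) (Z : {set R * C})
  (tr : R -> nat) (tc : C -> nat).
Hypothesis hA : 2 <= #|A|.
Hypothesis hB : 2 <= #|B|.
Hypothesis hs : Z \subset setX A B.
Hypothesis hv : cvalid A B Z tr tc.
Hypothesis cA : cost A B Z tr tc < 2 * #|A|.
Hypothesis cB : cost A B Z tr tc < 2 * #|B|.

Lemma rowS : \sum_(a in A) (rdeg B Z a + tr a) <= cost A B Z tr tc.
Proof. by rewrite big_split /= sum_rdeg // /cost /nout leq_add2l leq_addr. Qed.

Lemma colS : \sum_(b in B) (cdeg A Z b + tc b) <= cost A B Z tr tc.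
Proof. by rewrite big_split /= sum_cdeg // /cost /nout leq_add2l leq_addl. Qed.

Lemma hD' b : b \in B -> 1 <= cdeg A Z b + tc b.
Proof.
move=> hb; rewrite lt0n; apply/negP => /eqP h0.
have hc0 : cdeg A Z b = 0 by move: h0; case: (cdeg A Z b).
have ht0 : tc b = 0 by move: h0; rewrite hc0.
have : \sum_(a in A) 2 <= \sum_(a in A) (rdeg B Z a + tr a).
  apply: leq_sum => a ha; have := hv ha hb.
  by rewrite (negbTE (cdeg0 ha hc0)) hc0 ht0 !addn0.
rewrite sum_nat_const => h; have := leq_trans h rowS.
by rewrite mulnC leqNgt cA.
Qed.

Lemma hD a : a \in A -> 1 <= rdeg B Z a + tr a.
Proof.
move=> ha; rewrite lt0n; apply/negP => /eqP h0.
have hc0 : rdeg B Z a = 0 by move: h0; case: (rdeg B Z a).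
have ht0 : tr a = 0 by move: h0; rewrite hc0.
have : \sum_(b in B) 2 <= \sum_(b in B) (cdeg A Z b + tc b).
  apply: leq_sum => b hb; have := hv ha hb.
  by rewrite (negbTE (rdeg0 hb hc0)) hc0 ht0 !add0n addn0.
rewrite sum_nat_const => h; have := leq_trans h colS.
by rewrite mulnC leqNgt cB.
Qed.

Lemma key a0 : a0 \in A -> 0 < tr a0 -> step A B Z tr tc.
Proof.
move=> ha0 hp0.
case: (boolP [exists a, exists b, [&& a \in A, b \in B, 0 < tr a, (a, b) \notin Z &
            2 < (rdeg B Z a + tr a) + (cdeg A Z b + tc b)]]).
  case/existsP => a /existsP [b /and5P [ha hb hp hn h3]]; exact: (mv_rw1 hs hv ha hb hp hn h3).
move/existsPn => H1'.
have H1 : forall a b, a \in A -> b \in B -> 0 < tr a -> (a, b) \notin Z ->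
    (rdeg B Z a + tr a) + (cdeg A Z b + tc b) <= 2.
  move=> a b ha hb hp hn; have := H1' a; move/existsPn/(_ b).
  by rewrite ha hb hp hn /= -leqNgt.
case: (boolP [exists a, [&& a \in A, 0 < tr a & 1 < rdeg B Z a + tr a]]).
  case/existsP => a /and3P [ha hp h2].
  have full : forall b, b \in B -> (a, b) \in Z.
    move=> b hb; apply/negPn/negP => hn; have := H1 a b ha hb hp hn.
    have := hD' hb; move: h2; move: (rdeg B Z a + tr a) (cdeg A Z b + tc b) => x y; lia.
  have hr := rdeg_full full.
  case: (leqP 3 #|B|) => hB3.
    apply: (mv_del hs hv ha hp) => b hb; rewrite full // hr.
    have := hD' hb; move: hp hB3; move: (tr a) #|B| (cdeg A Z b + tc b) => x k y; lia.
  exfalso; case/card_gt1P: hA => x [y [hx hy nxy]].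
  have [a' ha' ne] : exists2 a', a' \in A & a != a'.
    case: (eqVneq a x) => [e|ne]; last by exists x.
    by exists y => //; rewrite e.
  have s2 := sum2 (fun a => rdeg B Z a + tr a) ha ha' ne.
  have hB2 : #|B| = 2 by move: hB hB3; move: #|B| => k; lia.
  apply: (ar_B2 (k := 3) (leqnn 3) _ (hD ha') (leq_trans s2 rowS)).
  - by rewrite hr hB2 -{1}(addn0 2) ltn_add2l.
  - by move: cB; rewrite hB2.
move/existsPn => H2'.
have H2 : forall a, a \in A -> 0 < tr a -> rdeg B Z a + tr a <= 1.
  by move=> a ha hp; have := H2' a; rewrite ha hp /= -leqNgt.
have r0 : rdeg B Z a0 = 0.
  by have := H2 a0 ha0 hp0; move: hp0; move: (rdeg B Z a0) (tr a0) => x y; lia.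
have t0 : tr a0 = 1.
  by have := H2 a0 ha0 hp0; move: hp0; move: (rdeg B Z a0) (tr a0) => x y; lia.
have z0 : forall b, b \in B -> (a0, b) \notin Z by move=> b hb; exact: rdeg0 hb r0.
have D'1 : forall b, b \in B -> cdeg A Z b + tc b = 1.
  move=> b hb; have := H1 a0 b ha0 hb hp0 (z0 b hb); have := hD' hb.
  rewrite r0 t0; move: (cdeg A Z b + tc b) => x; lia.
have [b0 hb0] : exists b0, b0 \in B.
  by apply/card_gt0P; move: hB; move: #|B| => k; lia.
case: (boolP [exists a1, [&& a1 \in A, a1 != a0 & 0 < tr a1]]).
  case/existsP => a1 /and3P [ha1 ne hp1].
  have r1 : rdeg B Z a1 = 0.
    by have := H2 a1 ha1 hp1; move: hp1; move: (rdeg B Z a1) (tr a1) => x y; lia.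
  apply: (mv_rw2 hs hv ha0 ha1 _ hb0 hp0 hp1 (z0 b0 hb0) (rdeg0 hb0 r1)).
    by rewrite eq_sym.
  by rewrite D'1.
move/existsPn => H3'.
have H3 : forall a, a \in A -> a != a0 -> tr a = 0.
  move=> a ha ne; have := H3' a; rewrite ha ne /= lt0n => /negPn /eqP //.
case: (boolP [exists b, (b \in B) && (0 < tc b)]).
  case/existsP => b /andP [hb hpb].
  have c0 : cdeg A Z b = 0.
    by have := D'1 b hb; move: hpb; move: (cdeg A Z b) (tc b) => x y; lia.
  case: (boolP [exists a, (a \in A) && (1 < rdeg B Z a + tr a)]).
    case/existsP => a' /andP [ha' h2].
    apply: step_tr; apply: (@mv_rw1 C R B A (trZ Z) tc tr _ _ b a') => //.
    - by rewrite sub_tr.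
    - exact: cvalid_trI.
    - by rewrite mem_trZ; exact: cdeg0 ha' c0.
    - rewrite rdeg_tr cdeg_tr D'1 //; move: h2; move: (rdeg B Z a' + tr a') => x; lia.
  move/existsPn => H4'.
  have D1 : forall a, a \in A -> rdeg B Z a + tr a = 1.
    move=> a ha; have := H4' a; rewrite ha /= -leqNgt; have := hD ha.
    move: (rdeg B Z a + tr a) => x; lia.
  have Z0 : #|Z| = 0.
    apply/eqP; rewrite cards_eq0; apply/eqP/setP => -[a1 b1]; rewrite inE.
    apply/negbTE/negP => hz.
    have := subsetP hs _ hz; rewrite inE /= => /andP [ha1 hb1].
    by have := hv ha1 hb1; rewrite hz D1 // D'1.
  have := cost_split tr tc hs; rewrite Z0 addn0.
  rewrite (eq_bigr (fun _ => 1)) // [X in _ = _ + X](eq_bigr (fun _ => 1)) // !sum1_card.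
  move=> ec; move: cA cB; rewrite ec; move: #|A| #|B| => x y; lia.
move/existsPn => H5'.
have tc0 : forall b, b \in B -> tc b = 0.
  by move=> b hb; have := H5' b; rewrite hb /= lt0n => /negPn /eqP.
have c1 : forall b, b \in B -> cdeg A Z b = 1.
  by move=> b hb; have := D'1 b hb; rewrite tc0 // addn0.
have ZB : #|Z| = #|B|.
  by rewrite -(sum_cdeg hs) (eq_bigr (fun _ => 1)) ?sum1_card.
have r3 : forall a, a \in A -> rdeg B Z a + 3 * (a == a0) >= 3.
  move=> a ha; case: (eqVneq a a0) => [->|ne]; first by rewrite muln1 leq_addl.
  rewrite muln0 addn0.
  have := hD ha; rewrite H3 // addn0 => /rdeg_ex [b hb hz].
  have := hv ha hb; rewrite hz H3 // c1 // tc0 // !addn0.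
  move: (rdeg B Z a) => x; lia.
have : \sum_(a in A) 3 <= \sum_(a in A) (rdeg B Z a + 3 * (a == a0)) by apply: leq_sum.
rewrite big_split /= sum_rdeg // -big_distrr /= sum_eq1 // sum_nat_const muln1.
have ntr : \sum_(a in A) tr a = 1.
  rewrite (bigD1 a0) //= t0 big1 // => a /andP [ha ne]; exact: H3.
have ntc : \sum_(b in B) tc b = 0 by rewrite big1 // => b hb; exact: tc0.
move=> hsum; exfalso; move: hsum cA hA; rewrite /cost /nout ntr ntc ZB; move: #|A| #|B| => x y; lia.
Qed.
End Key.

Definition goodG (R C : finType) (A : {set R}) (B : {set C}) (n : nat) :=
  exists G : {set R * C},
    [/\ G \subset setX A B, cvalid A B G (fun _ => 0) (fun _ => 0) & #|G| <= n].

Lemma goodG_tr (R C : finType) (A : {set R}) (B : {set C}) n : goodG B A n -> goodG A B n.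
Proof.
case=> G [h1 h2 h3]; exists (trZ G); split.
- by rewrite sub_tr.
- by apply: cvalid_tr; rewrite trZK.
- by rewrite card_trZ.
Qed.

Lemma abs_main (R C : finType) (A : {set R}) (B : {set C}) (Z : {set R * C}) tr tc :
  2 <= #|A| -> 2 <= #|B| -> Z \subset setX A B -> cvalid A B Z tr tc ->
  goodG A B (cost A B Z tr tc).
Proof.
move=> hA hB.
move: {2}(nout A B tr tc) (leqnn (nout A B tr tc)) => k.
elim: k Z tr tc => [|k IH] Z tr tc hk hs hv.
all: case: (leqP (2 * #|B|) (cost A B Z tr tc)) => cB.
all: try (case: (two_rows hA hB) => G [g1 g2 g3]; exists G; split => //; by rewrite g3).
all: case: (leqP (2 * #|A|) (cost A B Z tr tc)) => cA.
all: try (apply: goodG_tr; case: (two_rows hB hA) => G [g1 g2 g3]; exists G; split => //;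
          by rewrite g3).
all: case: (posnP (nout A B tr tc)) => n0.
all: try (exists Z; split => //; [ |by rewrite /cost leq_addr];
  move: n0; rewrite /nout => /eqP; rewrite addn_eq0 !sum_nat_eq0 => /andP [/forallP ht /forallP hc];
  move=> a b ha hb; have := hv a b ha hb;
  move: (ht a) (hc b); rewrite ha hb /= => /eqP -> /eqP ->; by rewrite !addn0).
- by move: hk; rewrite leqNgt n0.
suff [Z' [tr' [tc' [h1 h2 h3 h4]]]] : step A B Z tr tc.
  have [G [g1 g2 g3]] := IH Z' tr' tc' (leq_trans (ltnSn _) (leq_trans h4 hk) : _ <= k) h1 h2.
  by exists G; split => //; exact: leq_trans g3 h3.
case: (boolP [exists a, (a \in A) && (0 < tr a)]).
  case/existsP => a /andP [ha hp]; exact: (key hA hB hs hv cA cB ha hp).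
move/existsPn => H.
have t0 : \sum_(a in A) tr a = 0.
  by rewrite big1 // => a ha; move: (H a); rewrite ha /= lt0n => /negPn /eqP.
have [b /andP [hb hp]] : exists b, (b \in B) && (0 < tc b).
  apply/existsP; apply: contraLR n0 => /existsPn H'.
  rewrite -leqNgt leqn0 /nout t0 add0n; apply/eqP; rewrite big1 // => b hb.
  by move: (H' b); rewrite hb /= lt0n => /negPn /eqP.
apply: step_tr.
apply: (key (A := B) (B := A) (Z := trZ Z) (tr := tc) (tc := tr) hB hA _ _ _ _ hb hp).
- by rewrite sub_tr.
- exact: cvalid_trI.
- by rewrite cost_tr.
- by rewrite cost_tr.
Qed.

Lemma bigminn_le (I : eqType) (r : seq I) (P : pred I) (F : I -> nat) x0 j :
  j \in r -> P j -> \big[minn/x0]_(i <- r | P i) F i <= F j.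
Proof.
elim: r => // a r IH; rewrite inE big_cons => /orP [/eqP <-|hj] hp.
  by rewrite hp geq_minl.
case: (P a); last exact: IH.
exact: leq_trans (geq_minr _ _) (IH hj hp).
Qed.

Lemma gamma_le (T : finType) (g : rel T) (X : {set T}) : total2dom g X -> gamma2t g <= #|X|.
Proof. by move=> h; rewrite /gamma2t; apply: bigminn_le => //; exact: mem_index_enum. Qed.

Lemma transfer n m (A : {set 'I_n}) (B : {set 'I_m}) (G : {set 'I_n * 'I_m}) :
  cvalid A B G (fun _ => 0) (fun _ => 0) -> gamma2t (@KK #|A| #|B|) <= #|G|.
Proof.
move=> hv.
pose f : 'I_#|A| -> 'I_n := fun i => enum_val i.
pose g : 'I_#|B| -> 'I_m := fun i => enum_val i.
have fA i : f i \in A by exact: enum_valP.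
have gB j : g j \in B by exact: enum_valP.
have finj : injective f by exact: enum_val_inj.
have ginj : injective g by exact: enum_val_inj.
have fsurj x : x \in A -> exists i, f i = x.
  by move=> hx; exists (enum_rank_in hx x); exact: enum_rankK_in.
have gsurj x : x \in B -> exists i, g i = x.
  by move=> hx; exists (enum_rank_in hx x); exact: enum_rankK_in.
pose G' := [set u : 'I_#|A| * 'I_#|B| | (f u.1, g u.2) \in G].
pose h := fun u : 'I_#|A| * 'I_#|B| => (f u.1, g u.2).
have hinj : injective h.
  by move=> [x1 y1] [x2 y2] [/finj -> /ginj ->].
apply: (@leq_trans #|G'|).
  apply: gamma_le; apply/forallP => -[i j].
  have e : #|[set u in G' | KK (i, j) u]| =
      #|[set u in G' | cartadj (fun x y => x != y) (fun x y => x != y) (i, j) u]| by [].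
  rewrite e; have := nb_count G' i j.
  have er : #|[set y | (i, y) \in G']| = rdeg B G (f i).
    rewrite -(card_imset _ ginj); apply: eq_card => b; rewrite inE.
    apply/imsetP/andP.
      by case=> y; rewrite inE => hy ->; split => //; rewrite inE in hy.
    case=> hb hz; case: (gsurj b hb) => y ey; exists y; last by rewrite ey.
    by rewrite !inE /= ey.
  have ec : #|[set x | (x, j) \in G']| = cdeg A G (g j).
    rewrite -(card_imset _ finj); apply: eq_card => a; rewrite inE.
    apply/imsetP/andP.
      by case=> x; rewrite inE => hx ->; split => //; rewrite inE in hx.
    case=> ha hz; case: (fsurj a ha) => x ex; exists x; last by rewrite ex.
    by rewrite !inE /= ex.
  rewrite er ec => eq.
  have := hv (f i) (g j) (fA i) (gB j); rewrite !addn0 -eq.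
  have -> : ((f i, g j) \in G) = ((i, j) \in G') by rewrite inE.
  by rewrite leq_add2r.
rewrite -(card_imset _ hinj); apply: subset_leq_card; apply/subsetP => u.
by case/imsetP => v; rewrite inE => hv' ->.
Qed.

Unset Implicit Arguments.

Theorem lemma6 (n m r s : nat) (A : {set 'I_n}) (B : {set 'I_m})
  (S : {set 'I_n * 'I_m}) :
  2 <= n -> 2 <= m -> 2 <= r <= n -> 2 <= s <= m ->
  #|A| = r -> #|B| = s ->
  total2dom (@KK n m) S ->
  gamma2t (@KK r s) <= #|S :&: (setX A [set: 'I_m] :|: setX [set: 'I_n] B)|.
Proof.
move=> _ _ /andP [hr _] /andP [hs _] hA hB hS; subst r s.
pose Z := S :&: setX A B.
pose tr := fun a => #|[set y | (y \notin B) && ((a, y) \in S)]|.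
pose tc := fun b => #|[set x | (x \notin A) && ((x, b) \in S)]|.
have hsub : Z \subset setX A B by exact: subsetIr.
have hval : cvalid A B Z tr tc.
  move=> a b ha hb.
  have := forallP hS (a, b).
  have e : #|[set u in S | KK (a, b) u]| =
      #|[set u in S | cartadj (fun x y => x != y) (fun x y => x != y) (a, b) u]| by [].
  rewrite e => h2; have := nb_count S a b.
  have er : #|[set y | (a, y) \in S]| = rdeg B Z a + tr a.
    rewrite -(cardsID B [set y | (a, y) \in S]); congr (_ + _).
      by apply: eq_card => y; rewrite !inE ha /=; case: (y \in B); rewrite ?andbF ?andbT.
    by apply: eq_card => y; rewrite !inE andbC.
  have ec : #|[set x | (x, b) \in S]| = cdeg A Z b + tc b.
    rewrite -(cardsID A [set x | (x, b) \in S]); congr (_ + _).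
      by apply: eq_card => x; rewrite !inE hb /=; case: (x \in A); rewrite ?andbF ?andbT.
    by apply: eq_card => x; rewrite !inE andbC.
  have ez : ((a, b) \in Z) = ((a, b) \in S) by rewrite !inE /= ha hb !andbT.
  rewrite er ec ez => <-.
  by rewrite leq_add2r.
have hcost : cost A B Z tr tc <= #|S :&: (setX A [set: 'I_m] :|: setX [set: 'I_n] B)|.
  pose P := S :&: setX A (~: B).
  pose Q := S :&: setX (~: A) B.
  have eP : \sum_(a in A) tr a = #|P|.
    rewrite card_rows [RHS](bigID (fun a => a \in A)) /= [X in _ = _ + X]big1 ?addn0.
      by apply: eq_bigr => a ha; apply: eq_card => y; rewrite !inE ha /= andbC.
    move=> a ha; apply/eqP; rewrite cards_eq0; apply/eqP/setP => y.
    by rewrite !inE (negbTE ha) andbF.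
  have eQ : \sum_(b in B) tc b = #|Q|.
    rewrite card_cols [RHS](bigID (fun b => b \in B)) /= [X in _ = _ + X]big1 ?addn0.
      by apply: eq_bigr => b hb; apply: eq_card => x; rewrite !inE hb /= andbT andbC.
    move=> b hb; apply/eqP; rewrite cards_eq0; apply/eqP/setP => x.
    by rewrite !inE (negbTE hb) !andbF.
  have d1 : Z :&: P = set0.
    by apply/setP => -[x y]; rewrite !inE; case: (y \in B); rewrite ?andbF.
  have d2 : (Z :|: P) :&: Q = set0.
    by apply/setP => -[x y]; rewrite !inE; case: (x \in A); rewrite ?andbF.
  have := cardsUI Z P; rewrite d1 cards0 addn0 => e1.
  have := cardsUI (Z :|: P) Q; rewrite d2 cards0 addn0 e1 => e2.
  rewrite /cost /nout eP eQ addnA -e2.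
  apply: subset_leq_card; apply/subsetP => -[x y].
  by rewrite !inE /=; case: ((x, y) \in S); case: (x \in A); case: (y \in B).
have [G [g1 g2 g3]] := abs_main hr hs hsub hval.
exact: leq_trans (transfer g2) (leq_trans g3 hcost).
Qed.
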